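(* Let $f\ge 0$ with $3f<N$ and let $K\in\mathbb N$. The broadcast-process protocol described in the context is a deterministic solution to the $K$-round Marker Problem tolerating $f$ faults, with $T=3$ steps per round, message complexity $O(f+1)$ per round and signature complexity $O((f+1)^2)$ per round.
   Context: Model. There are $N$ processes $P_1,\dots,P_N$; $[N]=\{1,\dots,N\}$. Time proceeds in discrete steps $t=0,1,2,\dots$ (synchronous network). At each step every process first receives all messages sent to it at the previous step, each together with the identity of its sender, and then may send messages to any processes; the behaviour of an honest process is given by its protocol, a deterministic function of its inputs and of all messages it has received so far. Communication is authenticated: a process $P_j$ can sign a string $m$, producing $(m)_{P_j}$; every sent message is signed by its sender; no process other than $P_j$ can produce a string containing $(m)_{P_j}$ unless it copied it from a message it received, except that corrupted processes can produce signatures of any corrupted process. An $f$-adversary knows all protocols and all inputs (including future inputs), chooses at time $0$ a set of at most $f$ processes to corrupt, and makes them behave arbitrarily subject to the signature rule; the other processes are honest and follow their protocol. $\mathcal H$ denotes the set of honest processes. A protocol tolerates $f$ faults if its required properties hold against every $f$-adversary. Message complexity = number of messages sent by honest processes; signature complexity = number of signatures contained in messages sent by honest processes, counted with multiplicity (each nested signature and each repetition counts). Marker Problem ($K$ rounds of $T$ steps). Time is divided into $K$ consecutive rounds of $T$ steps. At the end of each round every honest process decides either ''unmarked'' or ''marked, with previous marked process $d$'' where $d\in[N]\cup\{\perp\}$. The marked process $M$ of round $1$ is $P_1$ if $P_1\in\mathcal H$ and $\perp$ otherwise; the marked process of round $i+1$ is the honest process that decided ''marked'' at the end of round $i$, or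 $\perp$ if there is none. At the beginning of round $i$, if $M\neq\perp$, $M$ receives an input $I_i\in[N]$ (''send the marker to $P_{I_i}$''). Required at the end of every round $i$: (consistency) at most one honest process decides it is marked; (liveness) if $M\in\mathcal H$, $I_i=n$ and $P_n\in\mathcal H$, then $P_n$ decides it is marked with previous marked process $M$; (non-impersonation) if $M=\perp$ and an honest process decides it is marked with previous marked process $d$, then $d\notin\mathcal H$. The message/signature complexity per round counts messages/signatures sent by honest processes during one round. Broadcast-process protocol. Fix $3f+1$ distinct processes, called broadcast processes. Each round $i$ consists of three steps. A ''proof that $Q$ is marked at round $i$'' is the empty string if $i=1$ and $Q=P_1$, and for $i>1$ is a collection of messages ''$X$ pays $Q$ at round $i-1$'' (for a single $X$) signed by at least $2f+1$ distinct broadcast processes. Step 1: the marked process $M$ with input $I_i=n$ sends the signed message ''I want to pay $P_n$ at round $i$'', together with its proof that it is marked at round $i$, to every broadcast process. Step 2: each honest broadcast process that received at least one such message carrying a valid proof (for round $i$) chooses one of them, say from $M$ to $P_n$, and sends the signed message ''$M$ pays $P_n$ at round $i$'' to $P_n$ only; it sends at most one such message per round. Step 3: a process $P_n$ that received messages ''$M$ pays $P_n$ at round $i$'' (same $M$) signed by at least $2f+1$ distinct broadcast processes decides that it is marked with previous marked process $M$, and keeps these messages as its proof that it is marked at round $i+1$; otherwise it decides it is unmarked. *)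

(* Defs.v *)
From mathcomp Require Import all_boot.
From Stdlib Require List.
Set Implicit Arguments. Unset Strict Implicit. Unset Printing Implicit Defensive.

(* Processes are P_1..P_N, identified with the naturals 1..N.               *)

(* Message contents ("strings"); [Sig j t] is the signature (t)_{P_j}.     *)
Inductive term : Type :=
| Atom of nat
| TNil
| Pair of term & term
| Sig of nat & term.

(* [t] occurs in [u] (copying a signed string out of a received message). *)
Inductive subterm : term -> term -> Prop :=
| sub_refl t : subterm t t
| sub_pairl t a b : subterm t a -> subterm t (Pair a b)
| sub_pairr t a b : subterm t b -> subterm t (Pair a b)
| sub_sig t j u : subterm t u -> subterm t (Sig j u).

Fixpoint nsig (t : term) : nat :=
  match t with
  | Atom _ | TNil => 0
  | Pair a b => nsig a + nsig b
  | Sig _ u => (nsig u).+1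
  end.

Fixpoint tlist (l : seq term) : term :=
  if l is a :: l' then Pair a (tlist l') else TNil.

Fixpoint untlist (t : term) : option (seq term) :=
  match t with
  | TNil => Some [::]
  | Pair a r => omap (cons a) (untlist r)
  | _ => None
  end.

Record msg := Msg { src : nat; dst : nat; body : term }.

(* A trace: [tr t] is the list of all messages sent at step t. *)
Definition trace := nat -> seq msg.

Definition recv (tr : trace) (p s : nat) : seq (nat * term) :=
  if s is s'.+1 then [seq (src m, body m) | m <- tr s' & dst m == p] else [::].

Definition view (tr : trace) (p t : nat) : nat -> seq (nat * term) :=
  fun s => if s <= t then recv tr p s else [::].

(* A deterministic protocol: what process p sends at step t (a list of
   (receiver, content)) and what it decides at the end of round i, as
   functions of its identity, its inputs (round -> input) and its view.
   Decision: None = "unmarked"; Some d = "marked, with previous marked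
   process d", where d = None encodes \perp. *)
Record protocol := Protocol {
  p_send : nat -> nat -> (nat -> option nat) -> (nat -> seq (nat * term))
           -> seq (nat * term);
  p_decide : nat -> nat -> (nat -> option nat) -> (nat -> seq (nat * term))
           -> option (option nat) }.

Definition inrange (N p : nat) : bool := (0 < p) && (p <= N).

Definition honest (N : nat) (C : seq nat) (p : nat) : bool :=
  inrange N p && (p \notin C).

(* inputs seen by p up to round i: I_j is given to p at round j iff p is
   the marked process M_j of round j *)
Definition inview (M : nat -> option nat) (I : nat -> nat) (p i : nat)
  : nat -> option nat :=
  fun j => if (0 < j <= i) && (M j == Some p) then Some (I j) else None.

(* Decision of p at the end of round i (rounds 1..K of T steps; round i is
   the steps T*(i-1) .. T*i - 1). *)
Definition decision (T : nat) (P : protocol) (tr : trace) (M : nat -> option nat)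
  (I : nat -> nat) (p i : nat) : option (option nat) :=
  p_decide P p i (inview M I p i) (view tr p (T * i).-1).

(* M i is the
   marked process of round i (None = \perp).  Corrupted processes behave
   arbitrarily subject to the signature rule. *)
Definition execution (N K T : nat) (P : protocol) (C : seq nat) (I : nat -> nat)
  (tr : trace) (M : nat -> option nat) : Prop :=
  [/\
      M 1 = (if honest N C 1 then Some 1 else None),
      (forall i, 0 < i < K ->
         match M i.+1 with
         | Some p => honest N C p /\ decision T P tr M I p i <> None
         | None => forall p, honest N C p -> decision T P tr M I p i = None
         end),
      (forall t p, t < K * T -> honest N C p ->
         [seq (dst m, body m) | m <- tr t & src m == p]
         = p_send P p t (inview M I p (t %/ T).+1) (view tr p t)),
      (forall t m, t < K * T -> List.In m (tr t) -> inrange N (src m)) &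
      (forall t m, t < K * T -> List.In m (tr t) -> src m \in C ->
         forall j x, honest N C j -> subterm (Sig j x) (body m) ->
         exists s, s <= t /\
           exists2 y, List.In y (recv tr (src m) s) & subterm (Sig j x) y.2)].

Definition marker_round_ok (N T : nat) (P : protocol) (C : seq nat)
  (I : nat -> nat) (tr : trace) (M : nat -> option nat) (i : nat) : Prop :=
  [/\
      (forall p q, honest N C p -> honest N C q ->
         decision T P tr M I p i <> None -> decision T P tr M I q i <> None ->
         p = q),
      (forall m n, M i = Some m -> honest N C m -> I i = n -> honest N C n ->
         decision T P tr M I n i = Some (Some m)) &
      (forall p d, M i = None -> honest N C p ->
         decision T P tr M I p i = Some d ->
         match d with Some d' => ~~ honest N C d' | None => true end)].

Definition msg_count_round (N T : nat) (C : seq nat) (tr : trace) (i : nat) : nat :=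
  \sum_(T * i.-1 <= t < T * i) count (fun m => honest N C (src m)) (tr t).

Definition sig_count_round (N T : nat) (C : seq nat) (tr : trace) (i : nat) : nat :=
  \sum_(T * i.-1 <= t < T * i)
     sumn [seq nsig (body m) | m <- tr t & honest N C (src m)].

(* "I want to pay P_n at round i" *)
Definition want_body (n i : nat) : term := Pair (Atom 0) (Pair (Atom n) (Atom i)).
(* "X pays Q at round i" *)
Definition pays_body (x q i : nat) : term :=
  Pair (Atom 1) (Pair (Atom x) (Pair (Atom q) (Atom i))).

Record pays_info := PaysInfo { ps_signer : nat; ps_payer : nat;
                               ps_payee : nat; ps_round : nat }.

Definition parse_pays (t : term) : option pays_info :=
  match t with
  | Sig b (Pair (Atom 1) (Pair (Atom x) (Pair (Atom q) (Atom r)))) =>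
      Some (PaysInfo b x q r)
  | _ => None
  end.

(* recognise a step-1 message: (I want to pay P_n at round r)_{P_s}, proof *)
Definition parse_want (t : term) : option (nat * nat * nat * term) :=
  match t with
  | Pair (Sig s (Pair (Atom 0) (Pair (Atom n) (Atom r)))) pr => Some (s, n, r, pr)
  | _ => None
  end.

Definition pays0 := PaysInfo 0 0 0 0.

(* "pr is a proof that Q is marked at round i" *)
Definition valid_proof (f : nat) (B : seq nat) (q i : nat) (pr : term) : bool :=
  if i == 1 then (q == 1) && (if pr is TNil then true else false)
  else match untlist pr with
       | Some l =>
           let ps := pmap parse_pays l in
           [&& size ps == size l,
               all (fun x => [&& ps_payee x == q, ps_round x == i.-1 &
                                 ps_payer x == ps_payer (head pays0 ps)]) ps &
               2 * f + 1 <= size (undup [seq ps_signer x | x <- ps & ps_signer x \in B])]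
       | None => false
       end.

Definition step2_cand (f : nat) (B : seq nat) (i : nat) (x : nat * term)
  : option (nat * nat) :=
  match parse_want x.2 with
  | Some (s, n, r, pr) =>
      if [&& s == x.1, r == i & valid_proof f B s i pr] then Some (x.1, n) else None
  | None => None
  end.

Definition pays_to (B : seq nat) (p i : nat) (rs : seq (nat * term)) : seq pays_info :=
  [seq x <- pmap (fun y => parse_pays y.2) rs |
     [&& ps_payee x == p, ps_round x == i & ps_signer x \in B]].

Definition signers_for (B : seq nat) (p i : nat) (rs : seq (nat * term)) (X : nat)
  : seq nat :=
  undup [seq ps_signer x | x <- pays_to B p i rs & ps_payer x == X].

Definition decided_prev (f : nat) (B : seq nat) (p i : nat) (rs : seq (nat * term))
  : option nat :=
  ohead [seq X <- undup (map ps_payer (pays_to B p i rs)) |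
           2 * f + 1 <= size (signers_for B p i rs X)].

Definition proof_of (f : nat) (B : seq nat) (p i : nat) (rs : seq (nat * term)) : term :=
  match decided_prev f B p i rs with
  | Some X => tlist [seq Sig b (pays_body X p i) | b <- signers_for B p i rs X]
  | None => TNil
  end.

(* sel b i l: the (deterministic) choice of broadcast process b at round i
   among the valid received requests l (list of (M, n)). *)
Definition bp_send (f : nat) (B : seq nat) (sel : nat -> nat -> seq (nat * nat) -> nat * nat)
  (p t : nat) (inp : nat -> option nat) (rcv : nat -> seq (nat * term))
  : seq (nat * term) :=
  let i := (t %/ 3).+1 in
  match t %% 3 with
  | 0 =>
      match inp i with
      | Some n =>
          let pr := if i == 1 then TNil else proof_of f B p i.-1 (rcv t.-1) in
          [seq (b, Pair (Sig p (want_body n i)) pr) | b <- B]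
      | None => [::]
      end
  | 1 =>
      if p \in B then
        match pmap (step2_cand f B i) (rcv t) with
        | [::] => [::]
        | c => let sn := sel p i c in [:: (sn.2, Sig p (pays_body sn.1 sn.2 i))]
        end
      else [::]
  | _ => [::]
  end.

Definition bp_decide (f : nat) (B : seq nat) (p i : nat) (inp : nat -> option nat)
  (rcv : nat -> seq (nat * term)) : option (option nat) :=
  omap Some (decided_prev f B p i (rcv (3 * i).-1)).

Definition broadcast_protocol (f : nat) (B : seq nat)
  (sel : nat -> nat -> seq (nat * nat) -> nat * nat) : protocol :=
  Protocol (bp_send f B sel) (bp_decide f B).

(* Main.v *)
Require Import Defs.
From mathcomp Require Import all_boot zify.
From HB Require Import structures.
Set Implicit Arguments. Unset Strict Implicit. Unset Printing Implicit Defensive.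


Definition term_eq_dec : forall x y : term, {x = y} + {x <> y}.
Proof. decide equality; apply: PeanoNat.Nat.eq_dec. Defined.
HB.instance Definition _ := hasDecEq.Build term (compareP term_eq_dec).
Definition msg_eq_dec : forall x y : msg, {x = y} + {x <> y}.
Proof. decide equality; try apply: PeanoNat.Nat.eq_dec; apply: term_eq_dec. Defined.
HB.instance Definition _ := hasDecEq.Build msg (compareP msg_eq_dec).
Definition pi_eq_dec : forall x y : pays_info, {x = y} + {x <> y}.
Proof. decide equality; apply: PeanoNat.Nat.eq_dec. Defined.
HB.instance Definition _ := hasDecEq.Build pays_info (compareP pi_eq_dec).

Lemma InE (T : eqType) (x : T) s : List.In x s <-> x \in s.
Proof.
elim: s => [|y s IH] //=; rewrite in_cons; split.
  by case=> [->|/IH ->]; rewrite ?eqxx ?orbT.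
by case/orP=> [/eqP ->|/IH]; [left|right].
Qed.

Lemma sub_nsig a u : subterm a u -> nsig a <= nsig u.
Proof. elim=> //= *; lia. Qed.

Lemma sub_sig_sig b x b' y : subterm (Sig b x) (Sig b' y) -> nsig y = 0 ->
  b = b' /\ x = y.
Proof.
move=> H; inversion H; subst => //.
move/sub_nsig: H2 => /= H2 H0; lia.
Qed.

Lemma sub_tlist b x l : subterm (Sig b x) (tlist l) ->
  exists2 y, y \in l & subterm (Sig b x) y.
Proof.
elim: l => [|a l IH] /= H; first by inversion H.
inversion H; subst.
  by exists a; rewrite ?in_cons ?eqxx.
by case: (IH H2) => y Hy Hs; exists y; rewrite ?in_cons ?Hy ?orbT.
Qed.

Lemma untlistK l : untlist (tlist l) = Some l.
Proof. by elim: l => //= a l ->. Qed.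

Lemma untlist_sub pr l y : untlist pr = Some l -> y \in l -> subterm y pr.
Proof.
elim: pr l => [n||a _ r IH|j u _] l //=.
  by case=> <-.
case E: (untlist r) => [l'|] //= [<-]; rewrite in_cons => /orP [/eqP ->|Hy].
  by apply: sub_pairl; constructor.
by apply: sub_pairr; apply: (IH l').
Qed.

Lemma parse_paysP t x : parse_pays t = Some x ->
  t = Sig (ps_signer x) (pays_body (ps_payer x) (ps_payee x) (ps_round x)).
Proof.
rewrite /parse_pays => H; repeat match type of H with
  | context[match ?x with _ => _ end] => destruct x; try discriminate end.
by case: H => <-.
Qed.

Lemma parse_wantP t s n r pr : parse_want t = Some (s, n, r, pr) ->
  t = Pair (Sig s (want_body n r)) pr.
Proof.
rewrite /parse_want => H; repeat match type of H with
  | context[match ?x with _ => _ end] => destruct x; try discriminate end.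
by case: H => -> -> -> ->.
Qed.

Lemma ohead_filterP (T : Type) (P : pred T) s x : ohead (filter P s) = Some x -> P x.
Proof. elim: s => //= a s IH; case: ifP => //= Ha; by [case=> <-|]. Qed.

Lemma ohead_filter_eq (T : eqType) (P : pred T) s x : x \in s -> P x ->
  (forall y, y \in s -> P y -> y = x) -> ohead (filter P s) = Some x.
Proof.
elim: s => //= a s IH; rewrite in_cons => Hx Px H.
case: ifP => Pa /=; first by rewrite (H a) // in_cons eqxx.
apply: IH => //; last by move=> y Hy; apply: H; rewrite in_cons Hy orbT.
case/orP: Hx => // /eqP E; by rewrite -E Px in Pa.
Qed.

Lemma nsig_tlist l : nsig (tlist l) = sumn (map nsig l).
Proof. by elim: l => //= a l ->. Qed.

Lemma count_sum_le (T : Type) (P : pred T) (g : T -> nat) (B : seq nat) s :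
  (forall x, List.In x s -> P x -> g x \in B) ->
  count P s <= \sum_(p <- B) count (fun x => P x && (g x == p)) s.
Proof.
elim: s => [|a s IH] H /=; first by rewrite big1_seq.
rewrite big_split /=; apply: leq_add; last first.
  by apply: IH => x Hx; apply: H; right.
case Pa: (P a) => //=.
have: g a \in B by apply: H; [left|].
clear IH H; elim: B => // p B' IHB; rewrite in_cons big_cons => /orP [/eqP ->|/IHB]; first by rewrite eqxx.
by move=> h; apply: leq_trans h _; apply: leq_addl.
Qed.

Lemma sumn_nsig1 (P : pred msg) s :
  (forall x, List.In x s -> P x -> nsig (body x) = 1) ->
  sumn [seq nsig (body x) | x <- s & P x] = count P s.
Proof.
elim: s => //= a s IH H; case: ifP => Pa /=.
  by rewrite H // ?IH //; [move=> x Hx; apply: H; right|left].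
by apply: IH => x Hx; apply: H; right.
Qed.

Lemma inter_lemma (f : nat) (B C S1 S2 : seq nat) :
  uniq B -> size B = 3 * f + 1 -> size C <= f ->
  uniq S1 -> uniq S2 -> {subset S1 <= B} -> {subset S2 <= B} ->
  2 * f + 1 <= size S1 -> 2 * f + 1 <= size S2 ->
  exists b, [/\ b \in S1, b \in S2 & b \notin C].
Proof.
move=> uB sB sC u1 u2 s1 s2 h1 h2.
have H1 : size S2 + count (predC (mem S2)) S1 <= 3 * f + 1.
  rewrite -sB -size_filter -size_cat; apply: uniq_leq_size.
    rewrite cat_uniq u2 filter_uniq // andbT; apply/hasPn => x.
    by rewrite mem_filter => /andP [].
  move=> x; rewrite mem_cat => /orP [/s2 //|]; rewrite mem_filter => /andP [_ /s1] //.
have H2 : size S1 = count (mem S2) S1 + count (predC (mem S2)) S1.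
  by rewrite -(count_predC (mem S2)).
case: (boolP (has (fun b => (b \in S2) && (b \notin C)) S1)).
  by case/hasP => b Hb /andP [Hb2 HbC]; exists b.
move/hasPn => Hn.
have : size (filter (mem S2) S1) <= size C.
  apply: uniq_leq_size; first by rewrite filter_uniq.
  move=> x; rewrite mem_filter => /andP [Hx2 Hx1].
  have Hx2' : x \in S2 by [].
  by move: (Hn x Hx1); rewrite Hx2' /= negbK.
rewrite size_filter; lia.
Qed.

Lemma sub_pair_inv b x u v : subterm (Sig b x) (Pair u v) ->
  subterm (Sig b x) u \/ subterm (Sig b x) v.
Proof. by move=> H; inversion H; [left|right]. Qed.

Lemma sub_nil b x : subterm (Sig b x) TNil -> False.
Proof. by move=> H; inversion H. Qed.

Lemma step2P f B i x c0 : step2_cand f B i x = Some c0 -> exists n pr,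
  [/\ parse_want x.2 = Some (x.1, n, i, pr), valid_proof f B x.1 i pr & c0 = (x.1, n)].
Proof.
rewrite /step2_cand; case E: (parse_want x.2) => [[[[s n] r] pr]|] //.
case: ifP => // /and3P [/eqP Es /eqP Er Hv] [<-]; subst.
by exists n, pr; split.
Qed.

Lemma pmap_sigs (S : seq nat) X m r :
  pmap parse_pays [seq Sig b (pays_body X m r) | b <- S] = [seq PaysInfo b X m r | b <- S].
Proof. by elim: S => //= b S ->. Qed.

Lemma valid_of f B m r X S : uniq S -> all (mem B) S -> 2 * f + 1 <= size S ->
  valid_proof f B m r.+2 (tlist [seq Sig b (pays_body X m r.+1) | b <- S]).
Proof.
move=> uS aS hS; rewrite /valid_proof /= untlistK /= pmap_sigs !size_map eqxx /=.
have -> : [seq ps_signer x | x <- [seq PaysInfo b X m r.+1 | b <- S] & ps_signer x \in B] = S.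
  elim: S uS aS {hS} => //= b S IH /andP [_ uS] /andP [Hb aS].
  have Hb' : b \in B by [].
  by rewrite /= Hb' map_cons (IH uS aS).
rewrite undup_id // hS andbT.
case: S {uS aS hS} => [|s0 S] //=; rewrite !eqxx /=.
by apply/allP => x /mapP [b _ ->]; rewrite /= !eqxx.
Qed.

Lemma filter_nil (T : eqType) (P : pred T) s :
  (forall x, x \in s -> ~~ P x) -> filter P s = [::].
Proof.
elim: s => //= a s IH H; rewrite (negbTE (H a _)) ?inE ?eqxx //.
by apply: IH => x Hx; apply: H; rewrite inE Hx orbT.
Qed.

Lemma sumn_map_le (T : Type) (g : T -> nat) s c :
  (forall x, List.In x s -> g x <= c) -> sumn (map g s) <= size s * c.
Proof.
elim: s => //= a s IH H; rewrite mulSn; apply: leq_add; first by apply: H; left.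
by apply: IH => x Hx; apply: H; right.
Qed.

Lemma signers_in B p i rs X b : b \in signers_for B p i rs X ->
  b \in B /\ exists2 y, y \in rs & y.2 = Sig b (pays_body X p i).
Proof.
rewrite /signers_for mem_undup => /mapP [x]; rewrite mem_filter => /andP [/eqP HX].
rewrite /pays_to mem_filter => /andP [/and3P [/eqP Hq /eqP Hr HB]].
rewrite mem_pmap => /mapP [y Hy Ex] ->; split => //; exists y => //.
by rewrite (parse_paysP (esym Ex)) HX Hq Hr.
Qed.

Lemma signers_sub B p i rs X : {subset signers_for B p i rs X <= B}.
Proof. by move=> b /signers_in []. Qed.

Lemma signers_uniq B p i rs X : uniq (signers_for B p i rs X).
Proof. exact: undup_uniq. Qed.

Lemma decided_size f B p i rs X : decided_prev f B p i rs = Some X ->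
  2 * f + 1 <= size (signers_for B p i rs X).
Proof. rewrite /decided_prev => H; exact: (ohead_filterP H). Qed.

Lemma recv_in tr p s y : y \in recv tr p s -> exists s', s = s'.+1 /\
  exists2 m, m \in tr s' & dst m = p /\ y = (src m, body m).
Proof.
case: s => //= s; move/mapP => [m]; rewrite mem_filter => /andP [/eqP Hd Hm] ->.
by exists s; split => //; exists m.
Qed.

Lemma recv_of tr p s m : m \in tr s -> dst m = p -> (src m, body m) \in recv tr p s.+1.
Proof. by move=> Hm Hd; rewrite /recv; apply: map_f; rewrite mem_filter Hd eqxx. Qed.

Section Main.
Variables (N f K : nat) (B : seq nat) (sel : nat -> nat -> seq (nat * nat) -> nat * nat).
Variables (C : seq nat) (I : nat -> nat) (tr : trace) (M : nat -> option nat).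
Hypothesis HBu : uniq B.
Hypothesis HBs : size B = 3 * f + 1.
Hypothesis HBr : all (inrange N) B.
Hypothesis Hsel : forall b i l, l != [::] -> sel b i l \in l.
Hypothesis HCu : uniq C.
Hypothesis HCs : size C <= f.
Hypothesis Hex : execution N K 3 (broadcast_protocol f B sel) C I tr M.

Local Notation hon := (honest N C).

Definition OUT p t := bp_send f B sel p t (inview M I p (t %/ 3).+1) (view tr p t).

Lemma out_of t p m : t < K * 3 -> m \in tr t -> src m = p -> hon p ->
  (dst m, body m) \in OUT p t.
Proof.
case: Hex => _ _ Hh _ _ Ht Hm Hs Hp; have := Hh t p Ht Hp; rewrite /OUT /= => <-.
by apply: map_f; rewrite mem_filter Hs eqxx Hm.
Qed.

Lemma out_to t p d x : t < K * 3 -> hon p -> (d, x) \in OUT p t ->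
  exists2 m, m \in tr t & [/\ src m = p, dst m = d & body m = x].
Proof.
case: Hex => _ _ Hh _ _ Ht Hp; have := Hh t p Ht Hp; rewrite /OUT /= => <-.
move/mapP => [m]; rewrite mem_filter => /andP [/eqP Hs Hm] [-> ->].
by exists m.
Qed.

Lemma honest_src t m : t < K * 3 -> m \in tr t -> src m \notin C -> hon (src m).
Proof.
case: Hex => _ _ _ Hr _ Ht Hm HC; rewrite /honest HC andbT.
by apply: Hr Ht _; apply/InE.
Qed.

Lemma out1 j p : OUT p (3 * j) = if M j.+1 == Some p then
  [seq (b, Pair (Sig p (want_body (I j.+1) j.+1))
          (if j.+1 == 1 then TNil else proof_of f B p j (recv tr p (3 * j).-1))) | b <- B]
  else [::].
Proof.
rewrite /OUT /bp_send.
have -> : 3 * j %% 3 = 0 by lia.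
have -> : 3 * j %/ 3 = j by lia.
rewrite /inview /view leqnn leq_pred /=.
by case: (M j.+1 == Some p).
Qed.

Lemma out2 j p x : x \in OUT p (3 * j).+1 -> p \in B /\
  exists c, [/\ c = pmap (step2_cand f B j.+1) (recv tr p (3 * j).+1), c != [::] &
     x = ((sel p j.+1 c).2, Sig p (pays_body (sel p j.+1 c).1 (sel p j.+1 c).2 j.+1))].
Proof.
rewrite /OUT /bp_send.
have -> : (3 * j).+1 %% 3 = 1 by lia.
have -> : (3 * j).+1 %/ 3 = j by lia.
rewrite /view leqnn.
case: (p \in B) => //.
case E: (pmap _ _) => [|a l] //; rewrite inE => /eqP ->; split => //.
by exists (a :: l).
Qed.

Lemma out3 j p : OUT p (3 * j).+2 = [::].
Proof.
rewrite /OUT /bp_send.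
by have -> : (3 * j).+2 %% 3 = 2 by lia.
Qed.

Definition chose b r X q := [/\ 0 < r, r <= K &
  exists2 m0, m0 \in tr (3 * r.-1).+1 & src m0 = b /\ body m0 = Sig b (pays_body X q r)].

Lemma sig_inv t : t < K * 3 -> forall m, m \in tr t -> forall b X q r, hon b ->
  subterm (Sig b (pays_body X q r)) (body m) -> chose b r X q /\ (3 * r.-1).+1 <= t.
Proof.
elim/ltn_ind: t => t IH Ht m Hm b X q r Hb Hsub.
case: (boolP (src m \in C)) => HC.
  case: Hex => _ _ _ _ Hs.
  have [s [Hst [y Hy Hys]]] := Hs t m Ht (proj2 (InE _ _) Hm) HC b _ Hb Hsub.
  move/InE: Hy => /recv_in [s' [Es [m' Hm' [_ Ey]]]]; subst s y.
  have [Hc Hle] := IH s' Hst (leq_ltn_trans (ltnW Hst) Ht) m' Hm' b X q r Hb Hys.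
  by split => //; apply: leq_trans Hle (ltnW Hst).
have Hp := honest_src Ht Hm HC.
have Ho := out_of Ht Hm erefl Hp.
move: Ho Hsub; set p := src m.
have Et : t = 3 * (t %/ 3) + t %% 3 by rewrite mulnC -divn_eq.
have : t %% 3 < 3 by apply: ltn_pmod.
move: Et; set j := t %/ 3; case: (t %% 3) => [|[|[|k]]] // Et _.
- rewrite addn0 in Et; rewrite Et out1.
  case: (M j.+1 == Some p) => //; case/mapP => b0 _ [_ ->] Hsub.
  case/sub_pair_inv: Hsub => H1.
    by have [_ ] := sub_sig_sig H1 erefl.
  move: H1; case: (j.+1 == 1).
    by move/sub_nil.
  rewrite /proof_of; case Ed: (decided_prev _ _ _ _ _) => [X0|]; last by move/sub_nil.
  case/sub_tlist => y /mapP [b1 Hb1 ->] /sub_sig_sig [] // Eb [EX Eq Er]; subst b1 X0 q r.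
  have [_ [y0 Hy Ey]] := signers_in Hb1.
  have [s' [Es [m' Hm' [_ Ey']]]] := recv_in Hy; subst y0.
  have Hs't : s' < t by rewrite Et; move: Es; case: (3 * j) => //= ? [->].
  have := IH s' Hs't (leq_ltn_trans (ltnW Hs't) Ht) m' Hm' b X p j Hb.
  rewrite /= in Ey; rewrite Ey => /(_ (Defs.sub_refl _)) [Hc Hle]; split => //.
  lia.
- rewrite addn1 in Et; rewrite Et => /out2 [_ [c [_ _ [_ Ebm]]]].
  rewrite Ebm; case/sub_sig_sig => // Eb [EX Eq Er]; subst b X q r.
  split => //; split => //; first by rewrite Et in Ht; lia.
  have -> : (3 * j.+1.-1).+1 = t by rewrite Et.
  by apply: (ex_intro2 _ _ m).
- by rewrite Et addn2 out3.
Qed.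

Lemma dec_some p i d : decision 3 (broadcast_protocol f B sel) tr M I p i = Some d ->
  exists X, d = Some X /\ decided_prev f B p i (recv tr p (3 * i).-1) = Some X.
Proof.
rewrite /decision /= /bp_decide /view leqnn.
by case: decided_prev => //= X [<-]; exists X.
Qed.

Lemma dec_chose i p X b : 0 < i <= K ->
  b \in signers_for B p i (recv tr p (3 * i).-1) X -> hon b -> chose b i X p.
Proof.
case/andP => Hi HiK Hb1 Hb.
have [_ [y Hy Ey]] := signers_in Hb1.
have [s' [Es [m' Hm' [_ Ey']]]] := recv_in Hy; subst y.
have Hs' : s' < K * 3 by lia.
have := sig_inv Hs' Hm' Hb; rewrite /= in Ey; rewrite Ey.
by move=> /(_ X p i (Defs.sub_refl _)) [].
Qed.

Lemma chose_uniq b r X q Y q' : hon b -> chose b r X q -> chose b r Y q' ->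
  X = Y /\ q = q'.
Proof.
move=> Hb [Hr HrK [m0 Hm0 [Hs0 Hb0]]] [_ _ [m1 Hm1 [Hs1 Hb1]]].
case: r Hr HrK Hm0 Hm1 Hb0 Hb1 => // j _ HjK /= Hm0 Hm1 Hb0 Hb1.
have Ht : (3 * j).+1 < K * 3 by lia.
have /out2 [_ [c [Ec _ E0]]] := out_of Ht Hm0 Hs0 Hb.
have /out2 [_ [c' [Ec' _ E1]]] := out_of Ht Hm1 Hs1 Hb.
subst c c'.
case: E0 => _; rewrite Hb0 => -[-> ->].
by case: E1 => _; rewrite Hb1 => -[-> ->].
Qed.

Lemma hon_of_B b : b \in B -> b \notin C -> hon b.
Proof. by move=> HbB HbC; rewrite /honest HbC andbT; apply: (allP HBr). Qed.

Lemma honB_size : 2 * f + 1 <= size [seq b <- B | b \notin C].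
Proof.
have H : count (mem C) B <= size C.
  rewrite -size_filter; apply: uniq_leq_size; first by rewrite filter_uniq.
  by move=> x; rewrite mem_filter => /andP [].
have := count_predC (mem C) B; rewrite size_filter HBs.
have -> : count (predC (mem C)) B = count (fun b => b \notin C) B by [].
lia.
Qed.

Lemma inter S1 S2 : uniq S1 -> uniq S2 -> {subset S1 <= B} -> {subset S2 <= B} ->
  2 * f + 1 <= size S1 -> 2 * f + 1 <= size S2 ->
  exists b, [/\ b \in S1, b \in S2 & hon b].
Proof.
move=> u1 u2 s1 s2 h1 h2.
have [b [Hb1 Hb2 HbC]] := inter_lemma HBu HBs HCs u1 u2 s1 s2 h1 h2.
by exists b; split => //; apply: hon_of_B => //; apply: s1.
Qed.

Lemma consistency i p q : 0 < i <= K -> hon p -> hon q ->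
  decision 3 (broadcast_protocol f B sel) tr M I p i <> None ->
  decision 3 (broadcast_protocol f B sel) tr M I q i <> None -> p = q.
Proof.
move=> Hi Hp Hq.
case E1: (decision _ _ _ _ _ p i) => [d1|] // _.
case E2: (decision _ _ _ _ _ q i) => [d2|] // _.
have [X [_ D1]] := dec_some E1; have [Y [_ D2]] := dec_some E2.
have [b [Hb1 Hb2 Hb]] := inter (signers_uniq _ _ _ _ _) (signers_uniq _ _ _ _ _)
  (@signers_sub _ _ _ _ _) (@signers_sub _ _ _ _ _) (decided_size D1) (decided_size D2).
have C1 := dec_chose Hi Hb1 Hb; have C2 := dec_chose Hi Hb2 Hb.
by have [_ ->] := chose_uniq Hb C1 C2.
Qed.

Lemma nonimp i p d : 0 < i <= K -> M i = None -> hon p ->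
  decision 3 (broadcast_protocol f B sel) tr M I p i = Some d ->
  match d with Some d' => ~~ hon d' | None => true end.
Proof.
move=> Hi HM Hp E; have [X [-> D]] := dec_some E.
apply/negP => HX.
have [b [Hb1 _ Hb]] := inter (signers_uniq _ _ _ _ _) (signers_uniq _ _ _ _ _)
  (@signers_sub _ _ _ _ _) (@signers_sub _ _ _ _ _) (decided_size D) (decided_size D).
have [_ HiK [m0 Hm0 [Hs0 Hb0]]] := dec_chose Hi Hb1 Hb.
case: i Hi HM E D Hb1 HiK Hm0 Hb0 => // j Hi HM E D Hb1 HiK /= Hm0 Hb0.
have Ht : (3 * j).+1 < K * 3 by lia.
have /out2 [_ [c [Ec Hc E0]]] := out_of Ht Hm0 Hs0 Hb.
case: E0 => _; rewrite Hb0 => -[EX _]; subst c.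
have := Hsel b j.+1 Hc; rewrite mem_pmap => /mapP [x Hx Ex].
have [n [pr [_ _ Ex']]] := step2P (esym Ex).
have [s' [Es [m' Hm' [_ Ex2]]]] := recv_in Hx; case: Es => Es; subst s' x.
rewrite Ex' /= in EX; subst X.
have Ht' : 3 * j < K * 3 by lia.
have := out_of Ht' Hm' erefl HX.
by rewrite out1 HM.
Qed.

Lemma out2' j p c : p \in B -> pmap (step2_cand f B j.+1) (recv tr p (3 * j).+1) = c ->
  c != [::] ->
  OUT p (3 * j).+1 = [:: ((sel p j.+1 c).2, Sig p (pays_body (sel p j.+1 c).1 (sel p j.+1 c).2 j.+1))].
Proof.
move=> HpB Ec Hc; rewrite /OUT /bp_send.
have -> : (3 * j).+1 %% 3 = 1 by lia.
have -> : (3 * j).+1 %/ 3 = j by lia.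
rewrite /view leqnn HpB Ec.
by case: c Ec Hc.
Qed.

Lemma valid_m j m : j.+1 <= K -> M j.+1 = Some m ->
  valid_proof f B m j.+1
    (if j.+1 == 1 then TNil else proof_of f B m j (recv tr m (3 * j).-1)).
Proof.
case: Hex => HM1 HMs _ _ _.
case: j => [|j] HK HM.
  rewrite HM1 in HM; case: (hon 1) HM => // -[<-] //.
have := HMs j.+1 (ltac:(lia)); rewrite HM.
move=> [Hm]; case Ed: (decision _ _ _ _ _ m j.+1) => [d|] // _.
have [X [_ D]] := dec_some Ed.
rewrite /= /proof_of D; apply: valid_of.
- exact: signers_uniq.
- by apply/allP => b /signers_sub.
- exact: decided_size D.
Qed.

Lemma sender_is_m j m m'' pr : j.+1 <= K -> M j.+1 = Some m -> m'' \in tr (3 * j) ->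
  subterm pr (body m'') -> valid_proof f B (src m'') j.+1 pr -> src m'' = m.
Proof.
case: Hex => HM1 HMs _ _ _.
case: j => [|j] HK HM Hm'' Hsub.
  rewrite HM1 in HM; case: (hon 1) HM => // -[<-].
  by rewrite /valid_proof /= => /andP [/eqP].
set s := src m''.
rewrite /valid_proof /=.
case El: (untlist pr) => [l|] //.
set ps := pmap parse_pays l.
case/and3P => _ /allP Hall Hsz.
set S1 := undup _ in Hsz.
have := HMs j.+1 (ltac:(lia)); rewrite HM.
move=> [Hm]; case Ed: (decision _ _ _ _ _ m j.+1) => [d|] // _.
have [X [_ D]] := dec_some Ed.
have u1 : uniq S1 by apply: undup_uniq.
have s1 : {subset S1 <= B}.
  by move=> b; rewrite mem_undup => /mapP [x]; rewrite mem_filter => /andP [Hb _] ->.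
have [b [Hb1 Hb2 Hb]] := inter u1 (signers_uniq _ _ _ _ _) s1 (@signers_sub _ _ _ _ _)
   Hsz (decided_size D).
have Cm := @dec_chose j.+1 m X b (ltac:(apply/andP; split => //; lia)) Hb2 Hb.
move: Hb1; rewrite mem_undup => /mapP [x]; rewrite mem_filter => /andP [_ Hx] Ebx.
have /and3P [/eqP Hq /eqP Hr /eqP Hpay] := Hall x Hx.
move: Hx; rewrite mem_pmap => /mapP [e He Ee].
have Ee' := parse_paysP (esym Ee).
have Hse : subterm e (body m'').
  have : subterm e pr by apply: untlist_sub El He.
  move: Hsub; clear; move: (body m'') => u H1 H2.
  elim: H1 e H2 => // [t a b _ IH|t a b _ IH|t j0 u0 _ IH] e H2.
  - by apply: sub_pairl; apply: IH.
  - by apply: sub_pairr; apply: IH.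
  - by apply: sub_sig; apply: IH.
rewrite Ee' Hq Hr -Ebx /= in Hse.
have Ht : 3 * j.+1 < K * 3 by lia.
have [Cs _] := sig_inv Ht Hm'' Hb Hse.
by have [_ ->] := chose_uniq Hb Cs Cm.
Qed.

Lemma liveness i m n : 0 < i <= K -> M i = Some m -> hon m -> I i = n -> hon n ->
  decision 3 (broadcast_protocol f B sel) tr M I n i = Some (Some m).
Proof.
case: i => // j /andP [_ HK] HM Hm HI Hn.
set pr0 := (if j.+1 == 1 then TNil else proof_of f B m j (recv tr m (3 * j).-1)).
have Hv : valid_proof f B m j.+1 pr0 by apply: valid_m.
have Ht0 : 3 * j < K * 3 by lia.
have Ht1 : (3 * j).+1 < K * 3 by lia.
have SA : forall b, b \in B -> exists2 m', m' \in tr (3 * j) &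
    [/\ src m' = m, dst m' = b & body m' = Pair (Sig m (want_body n j.+1)) pr0].
  move=> b HbB; apply: out_to => //.
  by rewrite out1 HM eqxx HI; apply: (map_f (fun b => (b, _))).
have SB : forall b, b \in B -> b \notin C -> exists2 m1, m1 \in tr (3 * j).+1 &
    [/\ src m1 = b, dst m1 = n & body m1 = Sig b (pays_body m n j.+1)].
  move=> b HbB HbC; have Hb := hon_of_B HbB HbC.
  set c := pmap (step2_cand f B j.+1) (recv tr b (3 * j).+1).
  have Hin : (m, n) \in c.
    have [m' Hm' [Hs Hd Hbd]] := SA b HbB.
    rewrite /c mem_pmap; apply/mapP; exists (src m', body m').
      by apply: recv_of.
    by rewrite /step2_cand /= Hbd /= Hs !eqxx Hv.
  have Hall : forall x, x \in c -> x = (m, n).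
    move=> x; rewrite /c mem_pmap => /mapP [x0 Hx0 Ex].
    have [n' [pr [Hp Hv' Ex']]] := step2P (esym Ex).
    have [s' [Es [m'' Hm'' [_ Ex0]]]] := recv_in Hx0; case: Es => Es; subst s' x0.
    have Hbd := parse_wantP Hp.
    have Hsrc : src m'' = m.
      apply: (sender_is_m HK HM Hm'' _ Hv').
      by rewrite /= in Hbd; rewrite Hbd; apply: sub_pairr; apply: Defs.sub_refl.
    have := out_of Ht0 Hm'' Hsrc Hm; rewrite out1 HM eqxx HI.
    case/mapP => b' _ [_]; rewrite /= in Hbd; rewrite Hbd => -[_ En _].
    by rewrite Ex' /= Hsrc -En.
  have Hc : c != [::] by case: (c) Hin.
  have Ho := out2' HbB erefl Hc.
  have : ((sel b j.+1 c).2, Sig b (pays_body (sel b j.+1 c).1 (sel b j.+1 c).2 j.+1))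
     \in OUT b (3 * j).+1 by rewrite Ho inE.
  rewrite (Hall _ (Hsel b j.+1 Hc)) /= => /(out_to Ht1 Hb) [m1 Hm1 [H1 H2 H3]].
  by exists m1.
rewrite /decision /= /bp_decide /view leqnn.
set rs := recv tr n (3 * j.+1).-1.
have Ers : rs = recv tr n (3 * j).+1.+1 by rewrite /rs; congr recv; lia.
have HS : forall b, b \in B -> b \notin C -> b \in signers_for B n j.+1 rs m.
  move=> b HbB HbC; have [m1 Hm1 [H1 H2 H3]] := SB b HbB HbC.
  rewrite /signers_for mem_undup; apply/mapP; exists (PaysInfo b m n j.+1) => //.
  rewrite mem_filter /= eqxx /pays_to mem_filter /= !eqxx HbB /= mem_pmap.
  apply/mapP; exists (src m1, body m1); first by rewrite Ers; apply: recv_of.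
  by rewrite H3 H1.
have Hsm : 2 * f + 1 <= size (signers_for B n j.+1 rs m).
  apply: leq_trans honB_size _; apply: uniq_leq_size; first by rewrite filter_uniq.
  by move=> b; rewrite mem_filter => /andP [HbC HbB]; apply: HS.
have [b0 Hb0] : exists b0, b0 \in [seq b <- B | b \notin C].
  have := honB_size; case: [seq b <- B | b \notin C] => [|b0 l] H.
    by rewrite addn1 in H.
  by exists b0; rewrite inE eqxx.
move: Hb0; rewrite mem_filter => /andP [Hb0C Hb0B].
have Hmin : m \in undup (map ps_payer (pays_to B n j.+1 rs)).
  have := HS b0 Hb0B Hb0C; rewrite /signers_for mem_undup => /mapP [x].
  rewrite mem_filter => /andP [/eqP Hx Hx2] _.
  by rewrite mem_undup -Hx; apply: map_f.
rewrite /decided_prev (@ohead_filter_eq _ _ _ m) //.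
move=> Y _ HY.
have [b [Hb1 Hb2 Hb]] := inter (signers_uniq _ _ _ _ _) (signers_uniq _ _ _ _ _)
  (@signers_sub _ _ _ _ _) (@signers_sub _ _ _ _ _) HY Hsm.
have HiK : 0 < j.+1 <= K by [].
have C1 := @dec_chose j.+1 n Y b HiK Hb1 Hb.
have C2 := @dec_chose j.+1 n m b HiK Hb2 Hb.
by have [-> _] := chose_uniq Hb C1 C2.
Qed.

Lemma Mhon j m0 : j.+1 <= K -> M j.+1 = Some m0 -> hon m0.
Proof.
case: Hex => HM1 HMs _ _ _; case: j => [|j] HK HM.
  by rewrite HM1 in HM; case: ifP HM => // H [<-].
by have := HMs j.+1 (ltac:(lia)); rewrite HM => -[].
Qed.

Lemma outE t p : t < K * 3 -> hon p ->
  [seq (dst x, body x) | x <- tr t & src x == p] = OUT p t.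
Proof. by case: Hex => _ _ Hh _ _ Ht Hp; rewrite (Hh t p Ht Hp). Qed.

Lemma step1_bound j : j.+1 <= K ->
  count (fun x => hon (src x)) (tr (3 * j)) <= 3 * f + 1 /\
  sumn [seq nsig (body x) | x <- tr (3 * j) & hon (src x)] <= (3 * f + 1) * (3 * f + 2).
Proof.
move=> HK; have Ht : 3 * j < K * 3 by lia.
case E: (M j.+1) => [m0|]; last first.
  have Ef : [seq x <- tr (3 * j) | hon (src x)] = [::].
    apply: filter_nil => x Hx; apply/negP => Hx'.
    by have := out_of Ht Hx erefl Hx'; rewrite out1 E.
  by rewrite -size_filter Ef.
have Hm0 := Mhon HK E.
have Ef : [seq x <- tr (3 * j) | hon (src x)] = [seq x <- tr (3 * j) | src x == m0].
  apply: eq_in_filter => x Hx; case: eqVneq => [->|Hne]; first by rewrite Hm0.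
  apply/negP => Hx'; have := out_of Ht Hx erefl Hx'; rewrite out1 E.
  by case: eqVneq => // -[] /esym; move/eqP: Hne.
have Eo := outE Ht Hm0; rewrite out1 E eqxx in Eo.
split.
  rewrite -size_filter Ef; have := congr1 size Eo; rewrite !size_map => ->.
  by rewrite HBs.
rewrite Ef.
have -> : [seq nsig (body x) | x <- tr (3 * j) & src x == m0] =
  map (fun y => nsig y.2) [seq (dst x, body x) | x <- tr (3 * j) & src x == m0].
  by rewrite -map_comp.
rewrite Eo -map_comp -HBs; apply: sumn_map_le => x _ /=.
rewrite (_ : 3 * f + 2 = 1 + (3 * f + 1)); last lia.
apply: leq_add => //.
case: (j.+1 == 1) => //; rewrite /proof_of; case: (decided_prev _ _ _ _ _) => [X|] //.
rewrite nsig_tlist -map_comp.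
apply: leq_trans (sumn_map_le (c := 1) _) _ => //.
rewrite muln1 -HBs; apply: uniq_leq_size; first exact: signers_uniq.
exact: signers_sub.
Qed.

Lemma step2_bound j : j.+1 <= K ->
  count (fun x => hon (src x)) (tr (3 * j).+1) <= 3 * f + 1 /\
  sumn [seq nsig (body x) | x <- tr (3 * j).+1 & hon (src x)] =
  count (fun x => hon (src x)) (tr (3 * j).+1).
Proof.
move=> HK; have Ht : (3 * j).+1 < K * 3 by lia.
split; last first.
  apply: sumn_nsig1 => x /InE Hx Hx'.
  by have /out2 [_ [c [_ _ [_ ->]]]] := out_of Ht Hx erefl Hx'.
apply: leq_trans (count_sum_le (g := src) (B := B) _) _.
  move=> x /InE Hx Hx'.
  by have /out2 [] := out_of Ht Hx erefl Hx'.
rewrite -HBs -sum1_size; apply: leq_sum => p _.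
case Hp: (hon p); last first.
  rewrite (eq_in_count (a2 := pred0)) ?count_pred0 // => x _ /=.
  by case: eqVneq => [->|]; rewrite ?Hp ?andbF.
rewrite (eq_in_count (a2 := fun x => src x == p)); last first.
  by move=> x _ /=; case: eqVneq => [->|]; rewrite ?Hp ?andbF.
rewrite -size_filter -(size_map (fun x => (dst x, body x))) (outE Ht Hp).
rewrite /OUT /bp_send.
have -> : (3 * j).+1 %% 3 = 1 by lia.
by case: (p \in B) => //; case: pmap.
Qed.

Lemma step3_bound j : j.+1 <= K ->
  [seq x <- tr (3 * j).+2 | hon (src x)] = [::].
Proof.
move=> HK; have Ht : (3 * j).+2 < K * 3 by lia.
apply: filter_nil => x Hx; apply/negP => Hx'.
by have := out_of Ht Hx erefl Hx'; rewrite out3.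
Qed.

Lemma round_ok i : 0 < i <= K ->
    [/\ marker_round_ok N 3 (broadcast_protocol f B sel) C I tr M i,
        msg_count_round N 3 C tr i <= 6 * (f + 1) &
        sig_count_round N 3 C tr i <= 12 * (f + 1) ^ 2].
Proof.
move=> Hi; split.
- split.
  + by move=> p q Hp Hq; apply: consistency.
  + by move=> m n HM Hm HI Hn; apply: liveness.
  + by move=> p d HM Hp E; apply: (nonimp Hi HM Hp E).
- case: i Hi => // j /andP [_ HK].
  rewrite /msg_count_round /=.
  have -> : 3 * j.+1 = (3 * j).+3 by lia.
  rewrite big_ltn; last lia. rewrite big_ltn; last lia. rewrite big_ltn; last lia.
  rewrite big_geq //.
  have [h1 _] := step1_bound HK; have [h2 _] := step2_bound HK.
  have h3 := step3_bound HK.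
  have h3' : count (fun m => hon (src m)) (tr (3 * j).+2) = 0 by rewrite -size_filter h3.
  lia.
- case: i Hi => // j /andP [_ HK].
  rewrite /sig_count_round /=.
  have -> : 3 * j.+1 = (3 * j).+3 by lia.
  rewrite big_ltn; last lia. rewrite big_ltn; last lia. rewrite big_ltn; last lia.
  rewrite big_geq //.
  have [_ h1] := step1_bound HK; have [h2 h2'] := step2_bound HK.
  have h3 := step3_bound HK; rewrite h3 /= h2'.
  nia.
Qed.

End Main.

Theorem mainTheorem4 :
  exists c1 c2 : nat,
  forall (N f K : nat) (B : seq nat)
         (sel : nat -> nat -> seq (nat * nat) -> nat * nat),
    3 * f < N ->
    uniq B -> size B = 3 * f + 1 -> all (inrange N) B ->
    (forall b i l, l != [::] -> sel b i l \in l) ->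
  forall (C : seq nat) (I : nat -> nat) (tr : trace) (M : nat -> option nat),
    uniq C -> size C <= f -> all (inrange N) C ->
    (forall i, 0 < i <= K -> inrange N (I i)) ->
    execution N K 3 (broadcast_protocol f B sel) C I tr M ->
  forall i, 0 < i <= K ->
    [/\ marker_round_ok N 3 (broadcast_protocol f B sel) C I tr M i,
        msg_count_round N 3 C tr i <= c1 * (f + 1) &
        sig_count_round N 3 C tr i <= c2 * (f + 1) ^ 2].
Proof.
exists 6, 12 => N f K B sel _ HBu HBs HBr Hsel C I tr M HCu HCs _ _ Hex i Hi.
exact: (round_ok HBu HBs HBr Hsel HCu HCs Hex Hi).
Qed.
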